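(* In the inexact augmented Lagrangian method described in the context, for all $t\ge1$, $$\|\lambda_t-\lambda^*\|\le\sqrt{\|\lambda_1-\lambda^*\|^2+2\beta\sum_{i=1}^{t-1}\epsilon_i}.$$
   Context: Problem: $\min_{x\in\mathcal{X}}f(x)$ s.t. $Ax=b$, with $f:\mathbb{R}^n\to\mathbb{R}$ convex and differentiable, $\mathcal{X}\subseteq\mathbb{R}^n$ nonempty, closed, bounded and convex, $A\in\mathbb{R}^{m\times n}$, $b\in\mathbb{R}^m$. Augmented Lagrangian $\mathcal{L}^\beta(x,\lambda)=f(x)+\langle\lambda,Ax-b\rangle+\frac{\beta}{2}\|Ax-b\|^2$, $\beta>0$; dual function $d(\lambda)=\min_{x\in\mathcal{X}}\mathcal{L}^\beta(x,\lambda)$; $\lambda^*$ is a maximizer of $d$ (assumed to exist); Euclidean norms. Method: given $x_1\in\mathcal{X}$, $\lambda_1$, nonnegative $(\epsilon_t)$, for $t\ge1$ choose $x_{t+1}\in\mathcal{X}$ with $\mathcal{L}^\beta(x_{t+1},\lambda_t)-d(\lambda_t)\le\epsilon_t$ and set $\lambda_{t+1}=\lambda_t+\frac{\beta}{2}(Ax_{t+1}-b)$. *)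

(* Defs.v *)
From HB Require Import structures.
From mathcomp Require Import all_boot all_order all_algebra.
From mathcomp Require Import all_classical all_reals all_analysis.
Set Implicit Arguments. Unset Strict Implicit. Unset Printing Implicit Defensive.
Import Order.TTheory GRing.Theory Num.Theory.
Import numFieldNormedType.Exports.
Local Open Scope classical_set_scope.
Local Open Scope ring_scope.

Definition dotv {R : realType} {k : nat} (u v : 'cV[R]_k) : R :=
  \sum_(i < k) u i ord0 * v i ord0.
Definition enorm {R : realType} {k : nat} (v : 'cV[R]_k) : R :=
  Num.sqrt (dotv v v).

Definition convex_fun {R : realType} {n : nat} (f : 'cV[R]_n -> R) : Prop :=
  forall x y t, 0 <= t <= 1 ->
    f (t *: x + (1 - t) *: y) <= t * f x + (1 - t) * f y.

Definition augLag {R : realType} {m n : nat} (f : 'cV[R]_n -> R)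
  (A : 'M[R]_(m, n)) (b : 'cV[R]_m) (beta : R) (x : 'cV[R]_n) (lam : 'cV[R]_m) : R :=
  f x + dotv lam (A *m x - b) + beta / 2 * enorm (A *m x - b) ^+ 2.

(* dual function d(lambda) = min_{x in X} L^beta(x, lambda); written as the
   infimum, which is attained (and hence is the minimum) under the standing
   assumptions (X compact nonempty, L continuous in x). *)
Definition dualf {R : realType} {m n : nat} (f : 'cV[R]_n -> R)
  (X : set 'cV[R]_n) (A : 'M[R]_(m, n)) (b : 'cV[R]_m) (beta : R) (lam : 'cV[R]_m) : R :=
  inf [set augLag f A b beta x lam | x in X].

(* Main.v *)
Require Import Defs.
From HB Require Import structures.
From mathcomp Require Import all_boot all_order all_algebra.
From mathcomp Require Import all_classical all_reals all_analysis.
Import Order.TTheory GRing.Theory Num.Theory.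
Import numFieldNormedType.Exports.
Local Open Scope classical_set_scope.
Local Open Scope ring_scope.

From mathcomp Require Import ring lra.
Lemma entry_le_norm {R : realType} p q (v : 'M[R]_(p, q)) i j : `|v i j| <= `|v|.
Proof.
have /mapP[k Hk ->] : `|v i j| \in [seq `|v x.1 x.2| | x : 'I_p * 'I_q].
  by apply/mapP; exists (i, j) => //=; rewrite mem_enum.
by rewrite [leRHS]/Num.norm /= mx_normrE; apply/bigmax_geP; right => /=; exists k.
Qed.

Lemma trmx_continuous {R : realType} p q : continuous (@trmx R p q).
Proof.
move=> M s /= /nbhs_ballP [e e0 es].
apply/nbhs_ballP; exists e => //= N [e0' MN]; apply: es; split => // i j.
rewrite !mxE; exact: MN.
Qed.

Lemma norm_le_tr {R : realType} p q (y : 'M[R]_(p, q)) : `|y| <= `|y^T|.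
Proof.
rewrite [leLHS]/Num.norm /=.
have [->|/mx_norm_neq0 [i ->]] := eqVneq (mx_norm y) 0.
  exact: normr_ge0.
by have := entry_le_norm _ _ (y^T) i.2 i.1; rewrite mxE.
Qed.

Lemma f_lb {R : realType} n (f : 'cV[R]_n -> R) (X : set 'cV[R]_n) :
  (forall z, differentiable f z) -> closed X -> bounded_set X ->
  exists M, forall x, X x -> - M <= f x.
Proof.
move=> df cX bX.
pose Y := (@trmx R 1 n) @^-1` X.
have cY : closed Y by apply: (continuous_closedP _).1 => //; exact: trmx_continuous.
have bY : bounded_set Y.
  case: bX => M [Mr HM]; exists M; split => // M' MM' y Yy.
  rewrite /=; apply: le_trans (norm_le_tr _ _ y) _; exact: HM.
have kY : compact Y by exact: bounded_closed_compact.
pose g := f \o (@trmx R 1 n).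
have gc : continuous g.
  move=> y; apply: continuous_comp; first exact: trmx_continuous.
  exact: differentiable_continuous.
have kg : compact (g @` Y) by apply: continuous_compact => //; exact: continuous_subspaceT.
have [M [_ HM]] := compact_bounded kg.
exists (M + 1) => x Xx.
have : `|f x| <= M + 1.
  apply: HM; first lra.
  exists x^T; rewrite /Y /= ?trmxK //.
  by rewrite /g /= trmxK.
by rewrite ler_norml => /andP[].
Qed.

Lemma dot_lb {R : realType} m n (X : set 'cV[R]_n) (A : 'M[R]_(m, n)) (b : 'cV[R]_m) (mu : 'cV[R]_m) :
  bounded_set X ->
  exists C, forall x, X x -> - C <= \sum_(i < m) mu i ord0 * (A *m x - b) i ord0.
Proof.
case=> M [Mr HM].
pose K := M + 1.
have hK : forall x, X x -> forall j, `|x j ord0| <= K.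
  move=> x Xx j; apply: le_trans (entry_le_norm _ _ x j ord0) _.
  by apply: (HM K) => //; rewrite /K; lra.
exists (\sum_(i < m) `|mu i ord0| * (\sum_(j < n) `|A i j| * K + `|b i ord0|)) => x Xx.
suff : `|\sum_(i < m) mu i ord0 * (A *m x - b) i ord0| <=
   \sum_(i < m) `|mu i ord0| * (\sum_(j < n) `|A i j| * K + `|b i ord0|).
  by rewrite ler_norml => /andP[].
apply: le_trans (ler_norm_sum _ _ _) _.
apply: ler_sum => i _; rewrite normrM; apply: ler_wpM2l => //.
rewrite !mxE; apply: le_trans (ler_normB _ _) _; apply: lerD => //.
apply: le_trans (ler_norm_sum _ _ _) _.
apply: ler_sum => j _; rewrite normrM; apply: ler_wpM2l => //; exact: hK.
Qed.
Section dot.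
Context {R : realType} {k : nat}.
Implicit Types u v w : 'cV[R]_k.

Lemma dotvC u v : dotv u v = dotv v u.
Proof. by apply: eq_bigr => i _; rewrite mulrC. Qed.
Lemma dotvDl u v w : dotv (u + v) w = dotv u w + dotv v w.
Proof. by rewrite /dotv -big_split; apply: eq_bigr => i _; rewrite mxE mulrDl. Qed.
Lemma dotvZl (a : R) u w : dotv (a *: u) w = a * dotv u w.
Proof. by rewrite /dotv mulr_sumr; apply: eq_bigr => i _; rewrite mxE mulrA. Qed.
Lemma dotvNl u w : dotv (- u) w = - dotv u w.
Proof. by rewrite -scaleN1r dotvZl mulN1r. Qed.
Lemma dotvBl u v w : dotv (u - v) w = dotv u w - dotv v w.
Proof. by rewrite dotvDl dotvNl. Qed.
Lemma dotvDr u v w : dotv w (u + v) = dotv w u + dotv w v.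
Proof. by rewrite dotvC dotvDl !(dotvC w). Qed.
Lemma dotvZr (a : R) u w : dotv w (a *: u) = a * dotv w u.
Proof. by rewrite dotvC dotvZl dotvC. Qed.
Lemma dotvBr u v w : dotv w (u - v) = dotv w u - dotv w v.
Proof. by rewrite dotvC dotvBl !(dotvC w). Qed.
Lemma dotvv_ge0 u : 0 <= dotv u u.
Proof. by apply: sumr_ge0 => i _; rewrite -expr2 sqr_ge0. Qed.
Lemma enorm_sq u : enorm u ^+ 2 = dotv u u.
Proof. by rewrite /enorm sqr_sqrtr // dotvv_ge0. Qed.
End dot.

Lemma halfP {R : realType} : Itv.spec (@Itv.num_sem R) (Itv.Real `[0%Z, 1%Z]) (2^-1).
Proof. rewrite /= /Itv.num_sem /= in_itv /= !num_real /=; apply/andP; split; lra. Qed.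
Definition half {R : realType} : {i01 R} := Itv.Def halfP.

Section step.
Context {R : realType} {m n : nat} (f : 'cV[R]_n -> R) (X : set 'cV[R]_n)
  (A : 'M[R]_(m, n)) (b : 'cV[R]_m) (beta : R).
Local Notation L := (augLag f A b beta).
Local Notation D := (dualf f X A b beta).

Lemma augLagE x l : L x l = f x + dotv l (A *m x - b) + beta / 2 * dotv (A *m x - b) (A *m x - b).
Proof. by rewrite /augLag enorm_sq. Qed.

Lemma step (lam lamstar lam' : 'cV[R]_m) (x' : 'cV[R]_n) eps :
  convex_fun f -> convex_set X -> 0 < beta ->
  (forall mu, has_lbound [set L x mu | x in X]) ->
  (forall mu, D mu <= D lamstar) -> X x' ->
  L x' lam - D lam <= eps -> lam' = lam + (beta / 2) *: (A *m x' - b) ->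
  dotv (lam' - lamstar) (lam' - lamstar) <= dotv (lam - lamstar) (lam - lamstar) + 2 * beta * eps.
Proof.
move=> cf cX b0 hlb hmax Xx' heps ->.
set g' := A *m x' - b.
have key : forall x, X x -> L x' lam - 2 * eps + beta / 4 * dotv g' g' <= L x (lam + (beta / 2) *: g').
  move=> x Xx.
  pose xs := (2^-1 : R) *: x' + (1 - 2^-1) *: x.
  have Xxs : X xs.
    have := cX x' x half; rewrite !inE => /(_ Xx' Xx); exact.
  have h1 : D lam <= L xs lam by apply: ge_inf (hlb lam) _ _; exists xs.
  have h2 : f xs <= 2^-1 * f x' + (1 - 2^-1) * f x by apply: cf; apply/andP; split; lra.
  set g := A *m x - b.
  have hg : A *m xs - b = (2^-1 : R) *: g' + (2^-1 : R) *: g.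
    rewrite /g /g' /xs mulmxDr -!scalemxAr; apply/matrixP => i j; rewrite !mxE; lra.
  move: h1 heps; rewrite !augLagE hg -/g' -/g.
  have c0 : 0 <= beta * dotv g g by apply: mulr_ge0; [exact: ltW | exact: dotvv_ge0].
  clearbody g g'.
  rewrite !(dotvDl, dotvDr, dotvZl, dotvZr) ?(dotvC g g').
  move: h2; lra.
have hD' : L x' lam - 2 * eps + beta / 4 * dotv g' g' <= D (lam + (beta / 2) *: g').
  by apply: lb_le_inf; [exists (L x' (lam + (beta / 2) *: g')); exists x' | move=> _ [x Xx <-]; apply: key].
have hD : D lamstar <= L x' lamstar by apply: ge_inf (hlb lamstar) _ _; exists x'.
have := hmax (lam + (beta / 2) *: g').
move: hD hD' heps; rewrite !augLagE -/g' => hD hD' heps hm.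
clearbody g'.
have hw : dotv (lam - lamstar) g' + beta / 4 * dotv g' g' <= 2 * eps.
  rewrite dotvBl; lra.
rewrite (_ : lam + _ - lamstar = (lam - lamstar) + (beta / 2) *: g'); last by rewrite addrAC.
move: hw; move: (lam - lamstar) => w hw.
rewrite dotvDl !dotvDr !dotvZl !dotvZr (dotvC g' w).
have := ler_wpM2l (ltW b0) hw.
lra.
Qed.
End step.

Lemma has_lb {R : realType} m n (f : 'cV[R]_n -> R) (X : set 'cV[R]_n)
  (A : 'M[R]_(m, n)) (b : 'cV[R]_m) (beta : R) :
  (forall z, differentiable f z) -> closed X -> bounded_set X -> 0 < beta ->
  forall mu, has_lbound [set augLag f A b beta x mu | x in X].
Proof.
move=> df cX bX b0 mu.
have [M HM] := @f_lb R n f X df cX bX.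
have [C HC] := @dot_lb R m n X A b mu bX.
exists (- M - C) => _ [x Xx <-].
rewrite /augLag.
have := HM x Xx; have := HC x Xx.
have : 0 <= beta / 2 * enorm (A *m x - b) ^+ 2.
  by apply: mulr_ge0; [lra | exact: sqr_ge0].
rewrite /dotv; lra.
Qed.

Theorem lemma10 (R : realType) (m n : nat)
  (f : 'cV[R]_n -> R) (X : set 'cV[R]_n) (A : 'M[R]_(m, n)) (b : 'cV[R]_m)
  (beta : R) (lamstar : 'cV[R]_m)
  (x : nat -> 'cV[R]_n) (lam : nat -> 'cV[R]_m) (eps : nat -> R) :
  convex_fun f ->
  (forall z, differentiable f z) ->
  X !=set0 -> closed X -> bounded_set X -> convex_set X ->
  0 < beta ->
  (forall mu, dualf f X A b beta mu <= dualf f X A b beta lamstar) ->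
  (forall t, 0 <= eps t) ->
  X (x 1%N) ->
  (forall t, (1 <= t)%N -> X (x t.+1)) ->
  (forall t, (1 <= t)%N ->
     augLag f A b beta (x t.+1) (lam t) - dualf f X A b beta (lam t) <= eps t) ->
  (forall t, (1 <= t)%N -> lam t.+1 = lam t + (beta / 2) *: (A *m x t.+1 - b)) ->
  forall t, (1 <= t)%N ->
    enorm (lam t - lamstar) <=
      Num.sqrt (enorm (lam 1%N - lamstar) ^+ 2 + 2 * beta * \sum_(1 <= i < t) eps i).
Proof.
move=> cf df neX cX bX cvX b0 hmax he0 X1 Xs heps hlam.
have hlb := @has_lb R m n f X A b beta df cX bX b0.
have main : forall t, (1 <= t)%N ->
  dotv (lam t - lamstar) (lam t - lamstar) <=
  dotv (lam 1%N - lamstar) (lam 1%N - lamstar) + 2 * beta * \sum_(1 <= i < t) eps i.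
  elim=> [//|t IH] t1.
  have [t0|tpos] := posnP t.
    by subst t; rewrite big_geq // mulr0 addr0.
  have IH' := IH tpos.
  rewrite big_nat_recr //=.
  have := @step R m n f X A b beta (lam t) lamstar (lam t.+1) (x t.+1) (eps t) cf cvX b0 hlb hmax (Xs t tpos) (heps t tpos) (hlam t tpos).
  lra.
move=> t t1.
rewrite /enorm enorm_sq ler_sqrt; first exact: main.
apply: addr_ge0; first exact: dotvv_ge0.
apply: mulr_ge0; first by apply: mulr_ge0 => //; lra.
by apply: sumr_ge0 => i _.
Qed.
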